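(* Let $G$ be a directed graph on vertex set $V$ with $|V|=n$, and let $E^+\subseteq V\times V$ be a set of at most $f$ edges. Let $H$ be the graph on $V$ whose edge set consists of the following edges: (1) for each strongly connected component $S$ of $G$, the edges of a directed cycle on the vertices of $S$; (2) for each $uv\in E^+$ and each $w\in V$, an edge $vw$ if $v$ can reach $w$ in $G\cup E^+$, and an edge $wv$ if $w$ can reach $v$ in $G\cup E^+$. (Then $H$ has $O(nf)$ edges.) Then for all $u,v\in V$, $u$ and $v$ are strongly connected in $G\cup E^+$ if and only if they are strongly connected in $H$.
   Context: Two vertices are strongly connected if each can reach the other; strongly connected components are the equivalence classes of this relation. *)

(* Defs.v *)
From mathcomp Require Import all_boot.
Set Implicit Arguments. Unset Strict Implicit. Unset Printing Implicit Defensive.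

Definition strongly_connected (V : finType) (e : rel V) (u v : V) : bool :=
  connect e u v && connect e v u.

Definition scc (V : finType) (e : rel V) (x : V) : {set V} :=
  [set y | strongly_connected e x y].
Definition sccs (V : finType) (e : rel V) : {set {set V}} :=
  [set scc e x | x in V].

Definition graph_union (V : finType) (G : rel V) (Eplus : {set V * V}) : rel V :=
  fun a b => G a b || ((a, b) \in Eplus).

(* A choice of directed cycle for every SCC: cyc S is a duplicate-free
   enumeration of S, and the cycle edges are x -> next (cyc S) x. *)
Definition cycle_choice (V : finType) (G : rel V) (cyc : {set V} -> seq V) : Prop :=
  forall S, S \in sccs G -> uniq (cyc S) /\ cyc S =i S.

Definition Hgraph (V : finType) (G : rel V) (Eplus : {set V * V})
    (cyc : {set V} -> seq V) : rel V :=
  fun a b =>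
    [exists S in sccs G, (a \in cyc S) && (next (cyc S) a == b)]
    || [exists uv in Eplus,
          ((a == uv.2) && connect (graph_union G Eplus) uv.2 b)
          || ((b == uv.2) && connect (graph_union G Eplus) a uv.2)].

(* Main.v *)
Require Import Defs.
From mathcomp Require Import all_boot.
Set Implicit Arguments.

Section L.
Variables (V : finType) (G : rel V) (Eplus : {set V * V}) (cyc : {set V} -> seq V).
Hypothesis cc : cycle_choice G cyc.
Let U := graph_union G Eplus.
Let H := Hgraph G Eplus cyc.

Lemma GU : subrel (connect G) (connect U).
Proof. apply: connect_sub => a b ab; apply: connect1; by rewrite /U /graph_union ab. Qed.

Lemma H_sub : subrel H (connect U).
Proof.
move=> a b /orP[/existsP[S /andP[Sin /andP[aS /eqP <-]]]|
                /existsP[e /andP[_ /orP[/andP[/eqP -> //]|/andP[/eqP -> //]]]]].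
have [_ cS] := cc Sin.
case/imsetP: Sin cS aS => x _ -> cS aS.
have : next (cyc (scc G x)) a \in scc G x by move: (cS (next (cyc (scc G x)) a)); rewrite mem_next aS => <-.
rewrite inE => /andP[xb _].
have : a \in scc G x by rewrite -(cS a).
rewrite inE => /andP[_ ax].
apply: GU; exact: connect_trans ax xb.
Qed.

Lemma HU : subrel (connect H) (connect U).
Proof. exact: connect_sub H_sub. Qed.

Lemma Usplit u v : connect U u v ->
  connect G u v \/ exists2 e, e \in Eplus & connect U u e.2 && connect U e.2 v.
Proof.
case/connectP=> p; elim: p u => [|w p IH] u /=; first by move=> _ ->; left.
case/andP=> uw pw vl.
have cwv : connect U w v by apply/connectP; exists p.
case/orP: uw => [guw|ew].
  case: (IH w pw vl) => [gwv|[e eE /andP[a b]]].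
    by left; apply: connect_trans (connect1 guw) gwv.
  right; exists e => //; rewrite b andbT.
  apply: connect_trans a; apply: connect1; by rewrite /U /graph_union guw.
right; exists (u, w) => //=; rewrite cwv andbT.
apply: connect1; by rewrite /U /graph_union ew orbT.
Qed.

Lemma key u v e : e \in Eplus -> connect U u e.2 -> connect U e.2 v ->
  connect U v u -> strongly_connected H u v.
Proof.
move=> eE ue ev vu.
have eu : connect U e.2 u by apply: connect_trans ev vu.
have ve : connect U v e.2 by apply: connect_trans vu ue.
have Hedge a b : (a == e.2) && connect U e.2 b || (b == e.2) && connect U a e.2 -> H a b.
  move=> h; apply/orP; right; apply/existsP; exists e; by rewrite eE.
apply/andP; split; apply: (@connect_trans _ _ e.2); apply: connect1; apply: Hedge;
  by rewrite ?eqxx ?ue ?ev ?eu ?ve ?orbT.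
Qed.

Lemma Gcase u v : connect G u v -> connect G v u -> connect H u v.
Proof.
move=> uv vu.
have Sin : scc G u \in sccs G by apply: imset_f.
have [Uc cS] := cc Sin.
have uc : u \in cyc (scc G u) by rewrite cS inE /strongly_connected !connect0.
have vc : v \in cyc (scc G u) by rewrite cS inE /strongly_connected uv vu.
have := fconnect_cycle (cycle_next Uc) uc v; rewrite vc => fc.
apply: connect_sub fc => a b /eqP <-.
case ac: (a \in cyc (scc G u)).
  apply: connect1; apply/orP; left; apply/existsP; exists (scc G u).
  by rewrite Sin ac eqxx.
by rewrite next_nth ac connect0.
Qed.

End L.


Theorem lemma9 (V : finType) (G : rel V) (Eplus : {set V * V}) (f : nat)
    (cyc : {set V} -> seq V) :
  #|Eplus| <= f ->
  cycle_choice G cyc ->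
  forall u v : V,
    strongly_connected (graph_union G Eplus) u v =
    strongly_connected (Hgraph G Eplus cyc) u v.
Proof.
move=> _ cc u v; apply/idP/idP; last first.
  by case/andP=> a b; apply/andP; split; [exact: (@HU _ _ _ _ cc _ _ a) | exact: (@HU _ _ _ _ cc _ _ b)].
case/andP=> uv vu.
case: (@Usplit _ _ _ _ _ uv) => [guv|[e eE /andP[a b]]]; last exact: (@key _ _ _ _ _ _ _ eE a b vu).
case: (@Usplit _ _ _ _ _ vu) => [gvu|[e eE /andP[a b]]].
  by apply/andP; split; apply: (@Gcase _ _ _ _ cc).
have := (@key _ G _ cyc v u _ eE a b uv); by rewrite /strongly_connected andbC.
Qed.
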